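(* Let $\mathbf{A}$ be a real $n\times n$ matrix that is TJS (respectively, STJS). Let $P$ be a permutation of $[n]$ and $\mathbf{P}$ the corresponding permutation matrix. Then $\mathbf{P}\mathbf{A}\mathbf{P}^{-1}$ (obtained from $\mathbf{A}$ by renumbering both rows and columns according to $P$) is TJS (respectively, STJS). In particular, the matrix obtained from $\mathbf{A}$ by reversing the order of both its rows and its columns is TJS (respectively, STJS).
   Context: For $J\subseteq[m]$, $J^c=[m]\setminus J$, an $m\times m$ matrix $(a_{ik})$ is $J$-sign-symmetric if $a_{ik}\ge0$ on $(J\times J)\cup(J^c\times J^c)$ and $a_{ik}\le0$ on $(J\times J^c)\cup(J^c\times J)$; strictly $J$-sign-symmetric if strictly. $\mathbf{A}^{(j)}$ is the $j$th compound matrix (all $j\times j$ minors, index sets in lexicographic order). $\mathbf{A}$ is TJS (resp. STJS) if $\mathbf{A}$ is (strictly) $J$-sign-symmetric for some $J\subseteq[n]$ and every $\mathbf{A}^{(j)}$, $j=2,\ldots,n$, is (strictly) $J_j$-sign-symmetric for some subset $J_j$ of its index set. *)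

(* Defs.v *)
From HB Require Import structures.
From mathcomp Require Import all_boot all_order all_algebra all_fingroup.
Set Implicit Arguments. Unset Strict Implicit. Unset Printing Implicit Defensive.
Import Order.TTheory GRing.Theory Num.Theory.
Local Open Scope ring_scope.

(* j-element subsets of [n] = {0,..,n-1}: the index set of the j-th compound *)
Notation ksub n j := {I : {set 'I_n} | #|I| == j}.

(* the a-th element (0-based, increasing order) of the j-subset I *)
Definition ksub_idx (n j : nat) (I : ksub n j) (a : 'I_j) : 'I_n :=
  @enum_val _ (mem (val I)) (cast_ord (esym (eqP (valP I))) a).

(* j-th compound matrix: entry (I,K) is the minor with rows I, columns K,
   both taken in increasing order *)
Definition compound (R : comNzRingType) (n j : nat) (A : 'M[R]_n)
  (I K : ksub n j) : R :=
  \det (\matrix_(a < j, b < j) A (ksub_idx I a) (ksub_idx K b)).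

Definition JSS (R : numDomainType) (T : finType) (a : T -> T -> R)
  (J : {set T}) : Prop :=
  forall i k, if (i \in J) == (k \in J) then 0 <= a i k else a i k <= 0.

Definition SJSS (R : numDomainType) (T : finType) (a : T -> T -> R)
  (J : {set T}) : Prop :=
  forall i k, if (i \in J) == (k \in J) then 0 < a i k else a i k < 0.

Definition TJS (R : realFieldType) (n : nat) (A : 'M[R]_n) : Prop :=
  (exists J : {set 'I_n}, JSS (fun i k => A i k) J) /\
  forall j : nat, (2 <= j <= n)%N ->
    exists J : {set ksub n j}, JSS (compound A) J.

Definition STJS (R : realFieldType) (n : nat) (A : 'M[R]_n) : Prop :=
  (exists J : {set 'I_n}, SJSS (fun i k => A i k) J) /\
  forall j : nat, (2 <= j <= n)%N ->
    exists J : {set ksub n j}, SJSS (compound A) J.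

Definition revmx (R : Type) (n : nat) (A : 'M[R]_n) : 'M[R]_n :=
  \matrix_(i, k) A (rev_ord i) (rev_ord k).

(* Main.v *)
Require Import Defs.
From HB Require Import structures.
From mathcomp Require Import all_boot all_order all_algebra all_fingroup.
Set Implicit Arguments. Unset Strict Implicit. Unset Printing Implicit Defensive.
Import Order.TTheory GRing.Theory Num.Theory.
Local Open Scope ring_scope.

Lemma m1_neq1 (R : realFieldType) : ((-1 : R) == 1) = false.
Proof. by apply/negbTE/eqP => H; have := @ltr01 R; rewrite -H oppr_gt0 => /(lt_trans ltr01); rewrite ltxx. Qed.

Lemma JSS_transfer (R : realFieldType) (T T' : finType) (a : T' -> T' -> R)
  (b : T -> T -> R) (f : T -> T') (e : T -> R) (J : {set T'}) :
  (forall i, e i = 1 \/ e i = -1) ->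
  (forall i k, b i k = e i * e k * a (f i) (f k)) ->
  JSS a J -> exists J', JSS b J'.
Proof.
move=> He Hb HJ; exists [set i | (f i \in J) == (e i == 1)] => i k.
rewrite !inE Hb; have := HJ (f i) (f k).
case: (He i) => ->; case: (He k) => ->; rewrite ?eqxx ?m1_neq1;
case: (f i \in J); case: (f k \in J) => //=;
rewrite ?mul1r ?mulN1r ?opprK ?mul1r ?mulN1r ?oppr_ge0 ?oppr_le0 //.
Qed.

Lemma SJSS_transfer (R : realFieldType) (T T' : finType) (a : T' -> T' -> R)
  (b : T -> T -> R) (f : T -> T') (e : T -> R) (J : {set T'}) :
  (forall i, e i = 1 \/ e i = -1) ->
  (forall i k, b i k = e i * e k * a (f i) (f k)) ->
  SJSS a J -> exists J', SJSS b J'.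
Proof.
move=> He Hb HJ; exists [set i | (f i \in J) == (e i == 1)] => i k.
rewrite !inE Hb; have := HJ (f i) (f k).
case: (He i) => ->; case: (He k) => ->; rewrite ?eqxx ?m1_neq1;
case: (f i \in J); case: (f k \in J) => //=;
rewrite ?mul1r ?mulN1r ?opprK ?mul1r ?mulN1r ?oppr_gt0 ?oppr_lt0 //.
Qed.

Lemma perm_align j (T : finType) (u v : 'I_j -> T) :
  injective u -> (forall a, exists b, v b = u a) ->
  exists sg : 'S_j, forall a, u a = v (sg a).
Proof.
move=> iu hv.
pose f a := odflt a [pick b | v b == u a].
have Hf a : v (f a) = u a.
  rewrite /f; case: pickP => [b /eqP //|H].
  by have [b Hb] := hv a; move: (H b); rewrite Hb eqxx.
have inj_f : injective f by move=> a a' H; apply: iu; rewrite -!Hf H.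
by exists (perm inj_f) => a; rewrite permE Hf.
Qed.

Lemma det_perm_rc (R : comNzRingType) j (M : 'M[R]_j) (sg tau : 'S_j) :
  \det (\matrix_(a, b) M (sg a) (tau b)) = (-1) ^+ sg * (-1) ^+ tau * \det M.
Proof.
have -> : \matrix_(a, b) M (sg a) (tau b) = row_perm sg (col_perm tau M).
  by apply/matrixP => a b; rewrite !mxE.
rewrite row_permE col_permE !det_mulmx !det_perm odd_permV.
by rewrite [\det M * _]mulrC mulrA.
Qed.

Lemma ksub_idx_inj n j (I : ksub n j) : injective (ksub_idx I).
Proof. by move=> a b /enum_val_inj /cast_ord_inj. Qed.

Lemma ksub_idx_in n j (I : ksub n j) a : ksub_idx I a \in val I.
Proof. exact: enum_valP. Qed.

Lemma ksub_idx_onto n j (I : ksub n j) x : x \in val I ->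
  exists a, ksub_idx I a = x.
Proof.
move=> Hx; exists (cast_ord (eqP (valP I)) (enum_rank_in Hx x)).
by rewrite /ksub_idx cast_ordK enum_rankK_in.
Qed.

Lemma kimg_proof n j (s : 'S_n) (I : ksub n j) : #|s @: val I| == j.
Proof. by rewrite card_imset ?(valP I) //; exact: perm_inj. Qed.

Definition kimg n j (s : 'S_n) (I : ksub n j) : ksub n j :=
  exist (fun X : {set 'I_n} => #|X| == j) (s @: val I) (kimg_proof s I).

Lemma compound_conj (R : realFieldType) n j (A B : 'M[R]_n) (s : 'S_n) :
  (forall i k, B i k = A (s i) (s k)) ->
  exists e : ksub n j -> R, (forall I, e I = 1 \/ e I = -1) /\
    forall I K, compound B I K = e I * e K * compound A (kimg s I) (kimg s K).
Proof.
move=> HB.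
have H : forall I : ksub n j, exists sg : 'S_j,
    forall a, s (ksub_idx I a) = ksub_idx (kimg s I) (sg a).
  move=> I; apply: perm_align.
    by move=> a b /perm_inj /ksub_idx_inj.
  move=> a; apply: ksub_idx_onto => /=.
  by apply: imset_f; exact: ksub_idx_in.
have [sg Hsg] := fin_all_exists H.
exists (fun I => (-1) ^+ (sg I) : R); split.
  by move=> I; case: (odd_perm (sg I)); [right; rewrite expr1 | left; rewrite expr0].
move=> I K; rewrite /compound -det_perm_rc; congr (\det _).
by apply/matrixP => a b; rewrite !mxE HB Hsg Hsg.
Qed.

Lemma conj_entry (R : realFieldType) n (A : 'M[R]_n) (s : 'S_n) i k :
  (perm_mx s *m A *m invmx (perm_mx s)) i k = A (s i) (s k).
Proof.
have -> : invmx (perm_mx s) = perm_mx s^-1 :> 'M[R]_n.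
  by rewrite -[LHS]mul1mx -(perm_mx1 R n) -(@mulVg _ s) perm_mxM -mulmxA (mulmxV (unitmx_perm R s)) mulmx1.
by rewrite -col_permE -row_permE !mxE.
Qed.

Lemma TJS_conj (R : realFieldType) n (A B : 'M[R]_n) (s : 'S_n) :
  (forall i k, B i k = A (s i) (s k)) -> TJS A -> TJS B.
Proof.
move=> HB [[J HJ] Hc]; split.
  apply: (@JSS_transfer _ _ _ (fun i k => A i k) _ s (fun _ => 1) J) => //.
    by move=> i; left.
  by move=> i k; rewrite HB !mul1r.
move=> j Hj; have [J' HJ'] := Hc j Hj.
have [e [He HBe]] := @compound_conj R n j A B s HB.
exact: (JSS_transfer He HBe HJ').
Qed.

Lemma STJS_conj (R : realFieldType) n (A B : 'M[R]_n) (s : 'S_n) :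
  (forall i k, B i k = A (s i) (s k)) -> STJS A -> STJS B.
Proof.
move=> HB [[J HJ] Hc]; split.
  apply: (@SJSS_transfer _ _ _ (fun i k => A i k) _ s (fun _ => 1) J) => //.
    by move=> i; left.
  by move=> i k; rewrite HB !mul1r.
move=> j Hj; have [J' HJ'] := Hc j Hj.
have [e [He HBe]] := @compound_conj R n j A B s HB.
exact: (SJSS_transfer He HBe HJ').
Qed.

Theorem proposition30 (R : realFieldType) (n : nat) (A : 'M[R]_n) (s : 'S_n) :
  (TJS A -> TJS (perm_mx s *m A *m invmx (perm_mx s))) /\
  (STJS A -> STJS (perm_mx s *m A *m invmx (perm_mx s))) /\
  (TJS A -> TJS (revmx A)) /\
  (STJS A -> STJS (revmx A)).
Proof.
have Hr : forall i k, revmx A i k = A (perm (@rev_ord_inj n) i) (perm (@rev_ord_inj n) k).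
  by move=> i k; rewrite !permE mxE.
split; first exact: (TJS_conj (conj_entry A s)).
split; first exact: (STJS_conj (conj_entry A s)).
split; [exact: (TJS_conj Hr) | exact: (STJS_conj Hr)].
Qed.
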